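(* $N^1(BA_2^+)=\Omega(n)$.
   Context: $BA_2^+$ is the syntactic ordered monoid of the language $(ab)^*\subseteq\{a,b\}^*$. Syntactic ordered monoid: for $L\subseteq\Sigma^*$ write $x\preceq_L y$ if for all $u,v\in\Sigma^*$, $uyv\in L\Rightarrow uxv\in L$, and $x\equiv_L y$ if both $x\preceq_L y$ and $y\preceq_L x$; the syntactic monoid is $\Sigma^*/\equiv_L$ ordered by $[x]\le_L[y]$ iff $x\preceq_L y$. Non-deterministic communication complexity: for $f:X\times Y\to\{0,1\}$, $N^1(f)$ is the minimum cost of a non-deterministic protocol for $f$; equivalently, up to an additive constant 2, $N^1(f)=\log_2 C^1(f)$, where $C^1(f)$ is the minimum number of rectangles $S\times T$ on which $f\equiv1$ whose union is $f^{-1}(1)$. An order ideal of an ordered monoid $M$ is a subset $I$ with $y\in I, x\le y\Rightarrow x\in I$. For an order ideal $I$, $N^1(M,I)(n)$ is $N^1$ of the function where Alice receives $m_1,m_3,\dots,m_{2n-1}\in M$, Bob receives $m_2,\dots,m_{2n}\in M$, with value $1$ iff $m_1\cdots m_{2n}\in I$; $N^1(M)(n)=\max_I N^1(M,I)(n)$. Asymptotics are as $n\to\infty$. *)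

(* Defs.v *)
From mathcomp Require Import all_boot.
Set Implicit Arguments. Unset Strict Implicit. Unset Printing Implicit Defensive.

Inductive letter := La | Lb.
Definition word := seq letter.

Definition inL (w : word) : Prop := exists k, w = flatten (nseq k [:: La; Lb]).

Definition synle (x y : word) : Prop :=
  forall u v : word, inL (u ++ y ++ v) -> inL (u ++ x ++ v).

Definition order_ideal (M : finType) (le : rel M) (I : {set M}) : Prop :=
  forall x y, y \in I -> le x y -> x \in I.

(** Product m_1 m_2 ... m_{2n}, Alice holding x_i = m_{2i-1}, Bob y_i = m_{2i}. *)
Definition interleave_prod (M : finType) (mul : M -> M -> M) (one : M) (n : nat)
    (x y : {ffun 'I_n -> M}) : M :=
  foldr mul one (flatten [seq [:: x i; y i] | i <- enum 'I_n]).

Definition commfun (M : finType) (mul : M -> M -> M) (one : M) (I : {set M}) (n : nat)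
    (x y : {ffun 'I_n -> M}) : bool :=
  interleave_prod mul one x y \in I.

Definition is_1cover (A B : finType) (f : A -> B -> bool) (rs : seq ({set A} * {set B})) : Prop :=
  (forall r, r \in rs -> forall x y, x \in r.1 -> y \in r.2 -> f x y) /\
  (forall x y, f x y -> exists2 r, r \in rs & (x \in r.1) && (y \in r.2)).

(* Main.v *)
Require Import Defs.
From mathcomp Require Import all_boot.

Lemma no_aa k u v : flatten (nseq k [:: La; Lb]) <> u ++ La :: La :: v.
Proof.
elim: k u => [|k IH] u /=; first by case: u.
case: u => [|x [|y u']] /=.
- by case.
- by case.
- by case=> _ _; apply: IH.
Qed.

Lemma card_sets n : #|{set 'I_n}| = 2 ^ n.
Proof.
by rewrite -cardsT -powersetT card_powerset cardsT card_ord.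
Qed.

Theorem mainTheorem10
  (M : finType) (mul : M -> M -> M) (one : M) (le : rel M) (phi : word -> M)
  (Hsurj : forall m : M, exists w, phi w = m)
  (Hmul : forall u v, phi (u ++ v) = mul (phi u) (phi v))
  (Hone : phi [::] = one)
  (Hanti : forall p q, le p q -> le q p -> p = q)
  (Hle : forall x y, le (phi x) (phi y) <-> synle x y) :
  exists K N0 : nat, 0 < K /\
    forall n : nat, N0 <= n ->
      exists I : {set M}, order_ideal le I /\
        forall rs, is_1cover (commfun mul one I (n:=n)) rs -> 2 ^ n <= (size rs) ^ K.
Proof.
exists 1, 0; split => // n _.
pose w0 : word := flatten [seq [:: La; Lb] | i <- enum 'I_n].
have w0L : inL w0.
  exists (size (enum 'I_n)); rewrite /w0; congr flatten.
  by elim: (enum 'I_n) => //= a s ->.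
exists [set m | le m (phi w0)]; split.
  move=> x y; rewrite !inE.
  have [a <-] := Hsurj x; have [b <-] := Hsurj y.
  move=> Hy Hxy; move: Hy Hxy => /Hle Hy /Hle Hxy.
  by apply/Hle; move=> u v /Hy /Hxy.
have Hprod : forall (A B : 'I_n -> word) (s : seq 'I_n),
    foldr mul one (flatten [seq [:: phi (A i); phi (B i)] | i <- s])
    = phi (flatten [seq A i ++ B i | i <- s]).
  move=> A B; elim=> [|i s IH] /=; first by rewrite Hone.
  by rewrite IH -!Hmul catA.
pose xw (S : {set 'I_n}) (i : 'I_n) : word := if i \in S then [:: La] else [::].
pose yw (S : {set 'I_n}) (i : 'I_n) : word := if i \in S then [:: Lb] else [:: La; Lb].
pose xS S := [ffun i => phi (xw S i)].
pose yS S := [ffun i => phi (yw S i)].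
have Hval : forall S T, commfun mul one [set m | le m (phi w0)] (xS S) (yS T)
      = le (phi (flatten [seq xw S i ++ yw T i | i <- enum 'I_n])) (phi w0).
  move=> S T; rewrite /commfun /interleave_prod inE -Hprod.
  by congr (le (foldr _ _ (flatten _)) _); apply: eq_map => i; rewrite !ffunE.
have Hgood : forall S, commfun mul one [set m | le m (phi w0)] (xS S) (yS S).
  move=> S; rewrite Hval.
  have -> : flatten [seq xw S i ++ yw S i | i <- enum 'I_n] = w0.
    rewrite /w0; congr flatten; apply: eq_map => i.
    by rewrite /xw /yw; case: (i \in S).
  by apply/Hle.
have Hbad : forall (S T : {set 'I_n}) (i : 'I_n), i \in S -> i \notin T ->
    ~~ commfun mul one [set m | le m (phi w0)] (xS S) (yS T).
  move=> S T i iS iT; rewrite Hval; apply/negP => /Hle H.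
  have := H [::] [::]; rewrite !cats0 /= => /(_ w0L) [k Hk].
  move: Hk; have : i \in enum 'I_n by rewrite mem_enum.
  case/splitPr => s1 s2; rewrite map_cat flatten_cat /=.
  rewrite /xw /yw (negPf iT) iS /=.
  by move/esym; apply: no_aa.
move=> rs [Hrect Hcov].
rewrite expn1 -card_sets cardE.
pose P S (r : {set {ffun 'I_n -> M}} * {set {ffun 'I_n -> M}}) :=
  (xS S \in r.1) && (yS S \in r.2).
pose g S := find (P S) rs.
have Hhas : forall S, has (P S) rs.
  move=> S; have [r rin Pr] := Hcov _ _ (Hgood S); by apply/hasP; exists r.
rewrite -(size_map g).
have -> : size rs = size (iota 0 (size rs)) by rewrite size_iota.
apply: uniq_leq_size; last first.
  move=> k /mapP [S _ ->]; rewrite mem_iota add0n /g -has_find; exact: Hhas.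
rewrite map_inj_in_uniq ?enum_uniq // => S T _ _ Hg.
pose d := (set0 : {set {ffun 'I_n -> M}}, set0 : {set {ffun 'I_n -> M}}).
have PS := nth_find d (Hhas S); have PT := nth_find d (Hhas T).
rewrite -/(g S) -/(g T) -Hg in PS PT *.
set r := nth d rs (g S) in PS PT.
have rin : r \in rs by rewrite mem_nth // -has_find.
case/andP: PS => xSr ySr; case/andP: PT => xTr yTr.
apply/setP => i.
case iS: (i \in S); case iT: (i \in T) => //.
  by have := Hrect r rin _ _ xSr yTr; move: (Hbad S T i); rewrite iS iT => /(_ isT isT) /negP.
by have := Hrect r rin _ _ xTr ySr; move: (Hbad T S i); rewrite iS iT => /(_ isT isT) /negP.
Qed.
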